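(* Let $\varphi\in C_0^\infty(\mathbb{R}^d)$ be a radial non-negative function supported in the unit ball, decreasing as the radius grows, with $\varphi(x)=1$ for $|x|\leq\frac34$. Let $\mu$ be a positive Borel measure on $\mathbb{R}^d$ such that $\mu(B_r(x))\leq r^{\alpha}$ for every open ball $B_r(x)$. Let $\nu$ be a signed measure absolutely continuous with respect to $\mu$. Then there is a constant $C$ such that for every disjoint family $\mathfrak{B}$ of open balls, $$\sum_{B_{r_j}(x_j)\in\mathfrak{B}}\left|\int\varphi\Big(\frac{y-x_j}{r_j}\Big)\,d\nu(y)\right|\leq C\, g\Big(\sum_{B_{r_j}(x_j)\in\mathfrak{B}} r_j^{\alpha}\Big),\qquad g(t)=\int_0^t\Big|\frac{d\nu}{d\mu}\Big|^*(s)\,ds.$$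
   Context: $\frac{d\nu}{d\mu}$ is the density of $\nu$ with respect to $\mu$. For a function $F$, its monotonic rearrangement (with respect to $\mu$) is $F^*(t)=\sup\{\beta : \mu\{x : F(x)>\beta\}\leq t\}$. A disjoint family of balls is one in which no two balls intersect. *)

(* Defs.v *)
From HB Require Import structures.
From mathcomp Require Import all_boot all_order all_algebra.
From mathcomp Require Import all_classical all_reals all_analysis.
Set Implicit Arguments. Unset Strict Implicit. Unset Printing Implicit Defensive.
Import Order.TTheory GRing.Theory Num.Theory.
Import numFieldNormedType.Exports.
Local Open Scope classical_set_scope.
Local Open Scope ring_scope.

Section defs.
Variables (R : realType) (d : nat).

Definition enorm (x : 'rV[R]_d) : R := Num.sqrt (\sum_(i < d) x ord0 i ^+ 2).

Definition eball (x : 'rV[R]_d) (r : R) : set 'rV[R]_d :=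
  [set y | enorm (y - x) < r].

(** R^d with its Borel sigma-algebra (generated by the open sets) *)
Definition Rd := g_sigma_algebraType (@open 'rV[R]_d).

Fixpoint Ck (k : nat) (f : 'rV[R]_d -> R) : Prop :=
  match k with
  | 0 => continuous f
  | k.+1 => continuous f /\
      forall v : 'rV[R]_d, (forall x, derivable f x v) /\ Ck k (fun x => 'D_v f x)
  end.

Definition smooth (f : 'rV[R]_d -> R) := forall k, Ck k f.

Definition compact_support (f : 'rV[R]_d -> R) :=
  compact (closure [set x | f x != 0]).
End defs.

Section charge_integral.
Context dT (T : measurableType dT) (R : realType).

(** Integral of h against a signed measure nu, defined via the Jordan
    decomposition nu = nu^+ - nu^- (for some Hahn decomposition). *)
Definition charge_integral (nu : {charge set T -> \bar R}) (h : T -> \bar R)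
    : \bar R :=
  let P := projT1 (cid (Hahn_decomposition nu)) in
  let HN := projT2 (cid (Hahn_decomposition nu)) in
  let N := projT1 (cid HN) in
  let nuPN := projT2 (cid HN) in
  (\int[jordan_pos nuPN]_x h x - \int[jordan_neg nuPN]_x h x)%E.

(** monotone (decreasing) rearrangement of F w.r.t. mu:
    F^*(t) = inf { b >= 0 : mu {x | F x > b} <= t } *)
Definition rearrangement (mu : set T -> \bar R) (F : T -> R) (t : R) : \bar R :=
  ereal_inf [set b%:E | b in [set b : R | 0 <= b /\ (mu [set x | (b < F x)%R] <= t%:E)%E]].

Definition g_rearr (mu : set T -> \bar R) (F : T -> R) (t : \bar R) : \bar R :=
  (\int[lebesgue_measure]_(s in [set s : R | (0 <= s)%R /\ (s%:E <= t)%E])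
     rearrangement mu F s)%E.
End charge_integral.

(* Main.v *)
Require Import Defs.
From HB Require Import structures.
From mathcomp Require Import all_boot all_order all_algebra.
From mathcomp Require Import all_classical all_reals all_analysis.
From mathcomp Require Import measurable_realfun.
Import Order.TTheory GRing.Theory Num.Theory.
Import numFieldNormedType.Exports.
Local Open Scope classical_set_scope.
Local Open Scope ring_scope.


Lemma ge0_le_integral_nm d (T : measurableType d) (R : realType)
  (mu : {measure set T -> \bar R}) (D : set T) (f1 f2 : T -> \bar R) :
  (forall x, D x -> 0 <= f1 x)%E -> (forall x, D x -> f1 x <= f2 x)%E ->
  (\int[mu]_(x in D) f1 x <= \int[mu]_(x in D) f2 x)%E.
Proof.
move=> f10 f12.
rewrite ge0_integralE// ge0_integralE; last first.
  by move=> x Dx; apply: le_trans (f10 x Dx) (f12 x Dx).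
apply: ge_ereal_sup => _ [h hf <-]; apply: ereal_sup_ubound; exists h => // x.
apply: le_trans (hf x) _; rewrite /patch; case: ifP => // /[!inE] Dx.
exact: f12.
Qed.

Section helpers.
Context d (T : measurableType d) (R : realType).

Lemma mset_ler (f g : T -> R) : measurable_fun setT f -> measurable_fun setT g ->
  measurable [set x | f x <= g x].
Proof.
move=> mf mg; have := measurable_fun_ler mf mg measurableT (Y := [set true]).
by rewrite setTI; apply.
Qed.

Lemma mset_ltr (f g : T -> R) : measurable_fun setT f -> measurable_fun setT g ->
  measurable [set x | f x < g x].
Proof.
move=> mf mg; have := measurable_fun_ltr mf mg measurableT (Y := [set true]).
by rewrite setTI; apply.
Qed.

Lemma indic_eqP (U V : Type) (A : set U) (B : set V) x y :
  (A x <-> B y) -> \1_A x = \1_B y :> R.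
Proof.
move=> AB; rewrite !indicE.
have [Ax|nAx] := boolP (x \in A); have [By|nBy] := boolP (y \in B) => //.
- by move: nBy; rewrite notin_setE => /(_ (AB.1 (set_mem Ax))).
- by move: nAx; rewrite notin_setE => /(_ (AB.2 (set_mem By))).
Qed.

End helpers.


Section HL.
Local Open Scope ereal_scope.
Context d (T : measurableType d) (R : realType).
Variable mu : {measure set T -> \bar R}.
Variable F : T -> R.
Hypothesis F0 : forall x, (0 <= F x)%R.
Hypothesis mF : measurable_fun setT F.

Lemma HL (E : set T) (mE : measurable E) (m : R) (muE : mu E = m%:E)
  (t : \bar R) (mt : m%:E <= t) :
  \int[mu]_(x in E) (F x)%:E <= g_rearr mu F t.
Proof.
have moo : mu E < +oo by rewrite muE ltry.
pose nuE := mfrestr mE moo.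
have mGs b : measurable (E `&` [set x | (b <= F x)%R]).
  by apply: measurableI => //; apply: mset_ler => //; exact: measurable_cst.
have [G GE] : {G : R -> \bar R | forall b, G b = mu (E `&` [set x | (b <= F x)%R])}.
  by exists (fun b => mu (E `&` [set x | (b <= F x)%R])).
have GleE b : G b <= mu E.
  by rewrite GE; apply: le_measure; rewrite ?inE //; exact: subIsetl.
have Gfin b : G b \is a fin_num.
  by rewrite ge0_fin_numE ?GE ?measure_ge0// -GE (le_lt_trans (GleE b)).
have Gni : {homo (fun b => fine (G b)) : x y / (x <= y)%R >-> (y <= x)%R}.
  move=> x y xy; rewrite fine_le ?Gfin // !GE; apply: le_measure; rewrite ?inE //.
  by move=> z [Ez yz]; split => //; exact: le_trans xy yz.
have mG : measurable_fun setT (fun b => fine (G b)).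
  exact: nonincreasing_measurable.
have [A [mA Aiff]] : exists A : set (T * R), measurable A /\
    forall x b, A (x, b) <-> [/\ E x, (0 <= b)%R & (b <= F x)%R].
  exists (E `*` setT `&` ([set p | (0 <= p.2)%R] `&` [set p | (p.2 <= F p.1)%R])).
  split; last first.
    move=> x b; split; first by move=> [[Ex _] [h1 h2]]; split.
    by move=> [Ex h1 h2]; split.
  apply: measurableI; first exact: measurableX.
  apply: measurableI; apply: mset_ler.
  - exact: measurable_cst.
  - exact: measurable_snd.
  - exact: measurable_snd.
  - exact: measurableT_comp mF measurable_fst.
pose k := fun p => (\1_A p)%:E : \bar R.
have mk : measurable_fun setT k by apply/measurable_EFinP/measurable_indic.
have k0 p : 0 <= k p by rewrite lee_fin.
have step1 : \int[mu]_(x in E) (F x)%:E = \int[nuE]_x \int[lebesgue_measure]_b k (x, b).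
  rewrite (eq_measure_integral nuE); last first.
    by move=> B mB BE; rewrite /nuE/= /mfrestr /mrestr setIidl.
  rewrite integral_mkcond; apply: eq_integral => x _.
  rewrite /patch; case: ifPn => [/set_mem Ex | /negP nEx].
  - transitivity (\int[lebesgue_measure]_b (\1_(`[0%R, F x]%classic) b)%:E).
      rewrite integral_indic//= setIT lebesgue_measure_itv/= lte_fin.
      have := F0 x; rewrite le_eqVlt => /predU1P[<-|->]; first by rewrite ltxx.
      by rewrite oppr0 adde0.
    apply: eq_integral => b _; rewrite /k; congr (_%:E); apply: indic_eqP.
    rewrite Aiff /= in_itv /=; split => [/andP [h1 h2] | [_ h1 h2]]; last exact/andP.
    by split.
  - have nEx' : ~ E x by move=> Ex; apply: nEx; exact: mem_set.
    apply/esym/integral0_eq => b _; rewrite /k indicE memNset; first by [].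
    by rewrite Aiff => -[].
have step2 := fubini_tonelli (m1 := nuE) (m2 := lebesgue_measure) k mk k0.
have [S [mS Siff]] : exists S : set (R * R), measurable S /\
    forall b s, S (b, s) <-> [/\ (0 <= b)%R, (0 <= s)%R & (s < fine (G b))%R].
  exists ([set p | (0 <= p.1)%R] `&` ([set p | (0 <= p.2)%R] `&`
                [set p : R * R | (p.2 < fine (G p.1))%R])).
  split; last first.
    move=> b s; split; first by move=> [h1 [h2 h3]]; split.
    by move=> [h1 h2 h3]; split.
  apply: measurableI; [|apply: measurableI].
  - by apply: mset_ler; [exact: measurable_cst|exact: measurable_fst].
  - by apply: mset_ler; [exact: measurable_cst|exact: measurable_snd].
  - apply: mset_ltr; first exact: measurable_snd.
    exact: measurableT_comp mG measurable_fst.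
pose k2 := fun p => (\1_S p)%:E : \bar R.
have mk2 : measurable_fun setT k2 by apply/measurable_EFinP/measurable_indic.
have k20 p : 0 <= k2 p by rewrite lee_fin.
have step4 := fubini_tonelli (m1 := lebesgue_measure) (m2 := lebesgue_measure) k2 mk2 k20.
have step3 : \int[lebesgue_measure]_b \int[nuE]_x k (x, b) =
    \int[lebesgue_measure]_b \int[lebesgue_measure]_s k2 (b, s).
  apply: eq_integral => b _.
  have [b0|b0] := leP 0%R b; last first.
    rewrite integral0_eq; last first.
      move=> x _; rewrite /k indicE memNset; first by [].
      by rewrite Aiff => -[_ /(lt_le_trans b0)]; rewrite ltxx.
    rewrite integral0_eq; first by [].
    move=> s _; rewrite /k2 indicE memNset; first by [].
    by rewrite Siff => -[/(lt_le_trans b0)]; rewrite ltxx.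
  transitivity (G b).
    transitivity (\int[nuE]_x (\1_(E `&` [set x | (b <= F x)%R]) x)%:E).
      apply: eq_integral => x _; rewrite /k; congr (_%:E); apply: indic_eqP.
      rewrite Aiff; split; first by move=> [].
      by move=> [Ex h]; split.
    rewrite integral_indic; last 2 first; try (first [exact: measurableT | exact: (mGs b)]).
    rewrite setIT GE /nuE /= /mfrestr /mrestr setIidl; first by [].
    exact: subIsetl.
  transitivity (\int[lebesgue_measure]_s (\1_(`[0%R, fine (G b)[%classic) s)%:E).
    rewrite integral_indic; last 2 first; try (first [exact: measurableT | exact: measurable_itv]).
    rewrite setIT /= lebesgue_measure_itv.
    have : (0 <= fine (G b))%R by rewrite fine_ge0 // GE measure_ge0.
    rewrite le_eqVlt => /predU1P[Gb0|Gb0].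
      rewrite -Gb0 /= ltxx -[G b]fineK; last exact: Gfin.
      by rewrite -Gb0.
    by rewrite /= lte_fin Gb0 oppr0 adde0 fineK.
  apply: eq_integral => s _; rewrite /k2; congr (_%:E); apply: indic_eqP.
  rewrite Siff /= in_itv /=; split => [/andP [h1 h2] | [_ h1 h2]]; last exact/andP.
  by split.
rewrite step1 step2 step3 step4 /g_rearr [leRHS]integral_mkcond.
apply: ge0_le_integral_nm => s _; first exact: integral_ge0.
have [Ys [mYs Ysiff]] : exists Ys : set R, measurable Ys /\
    forall b, Ys b <-> [/\ (0 <= b)%R, (0 <= s)%R & (s < fine (G b))%R].
  exists ([set b | (0 <= b)%R] `&` ([set b : R | (0 <= s)%R] `&`
                [set b | (s < fine (G b))%R])).
  split; last first.
    move=> b; split; first by move=> [h1 [h2 h3]]; split.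
    by move=> [h1 h2 h3]; split.
  apply: measurableI; [|apply: measurableI].
  - by apply: mset_ler; [exact: measurable_cst|exact: measurable_id].
  - by apply: mset_ler; exact: measurable_cst.
  - by apply: mset_ltr; [exact: measurable_cst|exact: mG].
have k2E : (fun b => k2 (b, s)) = (fun b => (\1_Ys b)%:E).
  apply/funext => b; rewrite /k2; congr (_%:E); apply: indic_eqP; rewrite Siff Ysiff.
  by [].
rewrite k2E.
rewrite integral_indic; last 2 first; try (first [exact: measurableT | exact: mYs]).
rewrite setIT.
have Ysm b : Ys b -> (s < m)%R.
  move=> /Ysiff[_ _ sG]; apply: lt_le_trans sG _.
  rewrite -lee_fin fineK; last exact: Gfin.
  by rewrite -muE.
rewrite /patch; case: ifPn => [/set_mem [s0 st] | /negP nD]; last first.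
  have -> : Ys = set0.
    apply/seteqP; split => [b Ysb|b []]; apply: nD; apply: mem_set.
    move: (Ysb) => /Ysiff[_ s0 _]; split; first exact: s0.
    by apply: (le_trans _ mt); rewrite lee_fin; apply/ltW/(Ysm b).
  by rewrite measure0.
have key b : Ys b -> b%:E <= rearrangement mu F s.
  move=> /Ysiff[b0 _ sG]; apply: le_ereal_inf_tmp => _ [b' [b'0 hb'] <-].
  rewrite lee_fin leNgt; apply/negP => b'b.
  have : G b <= mu [set x | (b' < F x)%R].
    rewrite GE; apply: le_measure; rewrite ?inE.
    - exact: mGs.
    - by apply: mset_ltr; [exact: measurable_cst|exact: mF].
    - by move=> x [_ bF]; exact: lt_le_trans b'b bF.
  move=> /le_trans /(_ hb'); rewrite -[G b]fineK ?Gfin // lee_fin.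
  by rewrite leNgt sG.
have R0 : 0 <= rearrangement mu F s.
  by apply: le_ereal_inf_tmp => _ [b' [b'0 _] <-]; rewrite lee_fin.
case Er : (rearrangement mu F s) => [r| |]; last 2 first.
- exact: leey.
- by move: R0; rewrite Er.
have YsI : Ys `<=` `[0%R, r]%classic.
  move=> b Ysb; have := key b Ysb; rewrite Er lee_fin => br.
  by move: (Ysb) => /Ysiff[b0 _ _]; rewrite /= in_itv /= b0 br.
have h1 : lebesgue_measure Ys <= lebesgue_measure `[0%R, r]%classic.
  by apply: le_measure; rewrite ?inE; [exact: mYs|exact: measurable_itv|exact: YsI].
apply: le_trans h1 _.
rewrite lebesgue_measure_itv /= lte_fin.
case: ifPn => [r0|]; first by rewrite oppr0 adde0.
by rewrite lee_fin -leNgt; move: R0; rewrite Er lee_fin.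
Qed.
End HL.


Section enorm_lemmas.
Context (R : realType) (d : nat).

Lemma enorm_ge0 (x : 'rV[R]_d) : 0 <= enorm x.
Proof. exact: sqrtr_ge0. Qed.

Lemma enorm0 : enorm (0 : 'rV[R]_d) = 0.
Proof. by rewrite /enorm big1 ?sqrtr0// => i _; rewrite mxE expr0n. Qed.

Lemma enormZ (c : R) (x : 'rV[R]_d) : enorm (c *: x) = `|c| * enorm x.
Proof.
rewrite /enorm -sqrtr_sqr -sqrtrM ?sqr_ge0//; congr Num.sqrt.
by rewrite mulr_sumr; apply: eq_bigr => i _; rewrite mxE exprMn.
Qed.

Lemma continuous_sumsq (x : 'rV[R]_d) (s : seq 'I_d) :
  continuous (fun y : 'rV[R]_d => \sum_(i <- s) (y ord0 i - x ord0 i) ^+ 2).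
Proof.
elim: s => [|i s IH].
  by under [X in continuous X]funext => y do rewrite big_nil; exact: cst_continuous.
under [X in continuous X]funext => y do rewrite big_cons.
move=> y.
apply: (@continuousD _ _ _ (fun y : 'rV[R]_d => (y ord0 i - x ord0 i) ^+ 2)
   (fun y => \sum_(j <- s) (y ord0 j - x ord0 j) ^+ 2)); last exact: IH.
have hc : continuous (fun y : 'rV[R]_d => y ord0 i - x ord0 i).
  move=> z; apply: (@continuousB _ _ _ (fun y : 'rV[R]_d => y ord0 i) (fun=> x ord0 i)).
    exact: coord_continuous.
  exact: cst_continuous.
exact: (@continuousM _ _ (fun y : 'rV[R]_d => y ord0 i - x ord0 i)
   (fun y : 'rV[R]_d => y ord0 i - x ord0 i) y (hc y) (hc y)).
Qed.

Lemma open_eball (x : 'rV[R]_d) (r : R) : open (eball x r).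
Proof.
have -> : eball x r = (fun y => Num.sqrt (\sum_(i < d) (y ord0 i - x ord0 i) ^+ 2))
    @^-1` [set z | z < r].
  have E y : enorm (y - x) = Num.sqrt (\sum_(i < d) (y ord0 i - x ord0 i) ^+ 2).
    by rewrite /enorm; congr Num.sqrt; apply: eq_bigr => i _; rewrite !mxE.
  by apply/seteqP; split => y; rewrite /eball /= E.
apply: open_comp; last exact: open_lt.
move=> y _; apply: continuous_comp; last exact: sqrt_continuous.
exact: continuous_sumsq.
Qed.

Lemma measurable_eball (x : 'rV[R]_d) (r : R) : measurable (eball x r : set (Rd R d)).
Proof. by apply: sub_sigma_algebra; exact: open_eball. Qed.

End enorm_lemmas.


Section ballb.
Context (R : realType) (d : nat) (phi : 'rV[R]_d -> R)
  (phi_ge0 : forall x, 0 <= phi x) (phi_le1 : forall x, phi x <= 1)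
  (phi_supp : forall x, phi x != 0 -> enorm x < 1)
  (mu : {measure set Rd R d -> \bar R})
  (nu : {charge set Rd R d -> \bar R})
  (f : Rd R d -> R) (mf : measurable_fun setT f)
  (f_dens : forall A : set (Rd R d), measurable A ->
     nu A = (\int[mu]_(x in A) (f x)%:E)%E).

Lemma jordan_bound (c : 'rV[R]_d) (r : R) (r0 : 0 < r) P N
  (nuPN : hahn_decomposition nu P N) :
  (`| \int[jordan_pos nuPN]_y (phi (r^-1 *: (y - c)))%:E
     - \int[jordan_neg nuPN]_y (phi (r^-1 *: (y - c)))%:E |
    <= \int[mu]_(y in eball c r) (`|f y|)%:E)%E.
Proof.
have [[mP _] [mN _] PUN PIN] := nuPN.
have mB : measurable (eball c r : set (Rd R d)) := measurable_eball _ _ c r.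
pose h (y : Rd R d) := (phi (r^-1 *: (y - c)))%:E.
have h0 y : (0 <= h y)%E by rewrite lee_fin.
have h1 y : (h y <= (\1_(eball c r) y)%:E)%E.
  rewrite /h indicE lee_fin; case: (boolP (y \in eball c r)) => yB.
    exact: phi_le1.
  have -> : phi (r^-1 *: (y - c)) = 0; last by [].
  apply/eqP; apply: contraNT yB => /phi_supp; rewrite enormZ ger0_norm ?invr_ge0 ?ltW//.
  by rewrite ltr_pdivrMl// mulr1 => ?; apply: mem_set.
have mfE : measurable_fun setT (EFin \o f) by exact/measurable_EFinP.
have mfA (A : set (Rd R d)) : measurable_fun A (fun x => (`|f x|)%:E).
  apply: measurable_funS (subsetT A) _ => //.
  by apply/measurable_EFinP; apply: measurableT_comp => //.
have mfA' (A : set (Rd R d)) : measurable_fun A (fun x => (f x)%:E).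
  exact: measurable_funS (subsetT A) mfE.
have Hpos : (\int[jordan_pos nuPN]_y h y <= \int[mu]_(y in eball c r `&` P) (`|f y|)%:E)%E.
  have := @ge0_le_integral_nm _ _ _ (jordan_pos nuPN) setT h (fun y => (\1_(eball c r) y)%:E)
     (fun y _ => h0 y) (fun y _ => h1 y).
  rewrite integral_indic // setIT => /le_trans; apply.
  have jp : jordan_pos nuPN (eball c r) = nu (eball c r `&` P).
    by rewrite jordan_posE cjordan_posE /crestr0 /crestr mem_set.
  apply: (@le_trans _ _ (nu (eball c r `&` P))); first by rewrite -jp.
  rewrite f_dens; last exact: measurableI.
  apply: le_trans (lee_abs _) _.
  exact: le_abse_integral (measurableI _ _ mB mP) (mfA' _).
have Hneg : (\int[jordan_neg nuPN]_y h y <= \int[mu]_(y in eball c r `&` N) (`|f y|)%:E)%E.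
  have := @ge0_le_integral_nm _ _ _ (jordan_neg nuPN) setT h (fun y => (\1_(eball c r) y)%:E)
     (fun y _ => h0 y) (fun y _ => h1 y).
  rewrite integral_indic // setIT => /le_trans; apply.
  have jn : jordan_neg nuPN (eball c r) = (- nu (eball c r `&` N))%E.
    by rewrite jordan_negE cjordan_negE /crestr0 /crestr mem_set.
  apply: (@le_trans _ _ (- nu (eball c r `&` N))%E); first by rewrite -jn.
  rewrite f_dens; last exact: measurableI.
  apply: le_trans (lee_abs _) _; rewrite abseN.
  exact: le_abse_integral (measurableI _ _ mB mN) (mfA' _).
have -> : eball c r = (eball c r `&` P) `|` (eball c r `&` N) :> set (Rd R d).
  by rewrite -setIUr PUN setIT.
rewrite ge0_integral_setU; last first.
all: try (first [ exact: measurableI | exact: mfA | by move=> x _; rewrite lee_fin |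
  by apply/disj_set2P; rewrite setIACA PIN setI0]).
apply: le_trans (lee_abs_sub _ _) _.
rewrite !gee0_abs.
all: try (by apply: integral_ge0 => y _; exact: h0).
exact: leeD.
Qed.

Lemma ball_bound (c : 'rV[R]_d) (r : R) (r0 : 0 < r) :
  (`| charge_integral nu (fun y : Rd R d => (phi (r^-1 *: (y - c)))%:E) |
    <= \int[mu]_(y in eball c r) (`|f y|)%:E)%E.
Proof. rewrite /charge_integral; exact: jordan_bound. Qed.
End ballb.


Section unions.
Context (R : realType) (d : nat) (mu : {measure set Rd R d -> \bar R})
  (g : Rd R d -> R) (g0 : forall x, 0 <= g x) (mg : measurable_fun setT g)
  (B : set ('rV[R]_d * R))
  (Bdisj : forall b b', B b -> B b' -> b <> b' ->
       eball b.1 b.2 `&` eball b'.1 b'.2 = set0).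

Definition Ub (s : seq ('rV[R]_d * R)) : set (Rd R d) :=
  foldr (fun b A => eball b.1 b.2 `|` A) set0 s.

Lemma Ub_mem s x : Ub s x -> exists2 b, b \in s & eball b.1 b.2 x.
Proof.
elim: s => [//|b s IH] /= [xb|/IH [b' b's xb']].
  by exists b => //; rewrite mem_head.
by exists b' => //; rewrite in_cons b's orbT.
Qed.

Lemma Ub_props (s : seq ('rV[R]_d * R)) : uniq s -> (forall b, b \in s -> B b) ->
  [/\ measurable (Ub s),
      (\sum_(b <- s) \int[mu]_(y in eball b.1 b.2) (g y)%:E =
        \int[mu]_(y in Ub s) (g y)%:E)%E
    & mu (Ub s) = (\sum_(b <- s) mu (eball b.1 b.2))%E].
Proof.
elim: s => [_ _|b s IH /= /andP [bs us] sB].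
  by rewrite !big_nil /= integral_set0 measure0; split.
have sB' b' : b' \in s -> B b' by move=> h; apply: sB; rewrite in_cons h orbT.
have [mU IU mUE] := IH us sB'.
have Bb : B b by apply: sB; rewrite mem_head.
have mb : measurable (eball b.1 b.2 : set (Rd R d)) := measurable_eball _ _ _ _.
have dis : eball b.1 b.2 `&` Ub s = set0.
  apply/seteqP; split => [x [xb /Ub_mem [b' b's xb']]|x []] //.
  have bb' : b <> b' by move=> bb'; move: bs; rewrite bb' b's.
  have := Bdisj _ _ Bb (sB' b' b's) bb'.
  by move=> /seteqP [/(_ x (conj xb xb'))].
split.
- exact: measurableU.
- rewrite big_cons ge0_integral_setU //; first by rewrite IU.
  + apply: measurable_funS (subsetT _) _ => //.
    by apply/measurable_EFinP.
  + by move=> x _; rewrite lee_fin.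
  + by apply/disj_set2P.
- by rewrite big_cons /= measureU //; congr (_ + _)%E; exact: mUE.
Qed.

End unions.


Theorem lemma16 (R : realType) (d : nat) (alpha : R) (phi : 'rV[R]_d -> R)
  (phi_smooth : smooth phi) (phi_cpt : compact_support phi)
  (phi_ge0 : forall x, 0 <= phi x)
  (phi_supp : forall x, phi x != 0 -> enorm x < 1)
  (phi_radial : forall x y, enorm x = enorm y -> phi x = phi y)
  (phi_decr : forall x y, enorm x <= enorm y -> phi y <= phi x)
  (phi_one : forall x, enorm x <= 3 / 4 -> phi x = 1)
  (mu : {measure set Rd R d -> \bar R})
  (mu_ball : forall (x : 'rV[R]_d) (r : R), 0 < r ->
     (mu (eball x r) <= (r `^ alpha)%:E)%E)
  (nu : {charge set Rd R d -> \bar R}) (nu_ac : nu `<< mu)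
  (f : Rd R d -> R) (f_int : mu.-integrable setT (EFin \o f))
  (f_dens : forall A : set (Rd R d), measurable A ->
     nu A = (\int[mu]_(x in A) (f x)%:E)%E) :
  exists C : R, forall B : set ('rV[R]_d * R),
    (forall b, B b -> 0 < b.2) ->
    (forall b b', B b -> B b' -> b <> b' ->
       eball b.1 b.2 `&` eball b'.1 b'.2 = set0) ->
    (\esum_(b in B)
        `| charge_integral nu (fun y : Rd R d => (phi (b.2^-1 *: (y - b.1)))%:E) |
     <= C%:E * g_rearr mu (fun x => `|f x|%R) (\esum_(b in B) (b.2 `^ alpha)%:E))%E.
Proof.
exists 1 => B Bpos Bdisj; rewrite mul1e.
have [mfE _] := integrableP _ _ _ f_int.
have mf : measurable_fun setT f by apply/measurable_EFinP.
have mg : measurable_fun setT (fun x => `|f x|) := measurableT_comp (@normr_measurable _ _) mf.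
have g0 x : 0 <= `|f x| by [].
have phi_le1 x : phi x <= 1.
  have <- : phi 0 = 1 by apply: phi_one; rewrite enorm0.
  by apply: phi_decr; rewrite enorm0 enorm_ge0.
apply: ge_ereal_sup => _ [X [finX XB] <-].
have [F XF] := finite_fsetP.1 finX.
have uF := finmap.fset_uniq F.
have sB b : b \in finmap.enum_fset F -> B b.
  by move=> bF; apply: XB; rewrite XF.
have XF' : X = [set` finmap.enum_fset F] by rewrite XF.
rewrite XF' -fsbig_seq //.
have [mU IU mUE] := @Ub_props _ _ mu _ g0 mg B Bdisj _ uF sB.
apply: le_trans (_ : _ <= \sum_(b <- finmap.enum_fset F)
   \int[mu]_(y in eball b.1 b.2) (`|f y|)%:E)%E _.
  rewrite big_seq_cond [X in (_ <= X)%E]big_seq_cond; apply: lee_sum => b /andP [bF _].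
  exact: (@ball_bound _ _ phi phi_ge0 phi_le1 phi_supp mu nu f mf f_dens b.1 b.2 (Bpos b (sB b bF))).
rewrite IU.
have h1 : (mu (Ub R d (finmap.enum_fset F)) <= \sum_(b <- finmap.enum_fset F) (b.2 `^ alpha)%:E)%E.
  rewrite mUE big_seq_cond [X in (_ <= X)%E]big_seq_cond; apply: lee_sum => b /andP [bF _].
  exact: (mu_ball b.1 b.2 (Bpos b (sB b bF))).
have fin : mu (Ub R d (finmap.enum_fset F)) \is a fin_num.
  rewrite ge0_fin_numE ?measure_ge0//; apply: le_lt_trans h1 _.
  by rewrite sumEFin ltry.
apply: (@HL _ _ _ mu _ g0 mg _ mU (fine (mu (Ub R d (finmap.enum_fset F))))).
  by rewrite fineK.
rewrite fineK //; apply: le_trans h1 _.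
apply: esum_ge; exists [set` finmap.enum_fset F].
  by split; [exact: finite_seq | move=> b /= bF; exact: sB].
by rewrite fsbig_seq.
Qed.
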